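(* Let $\mathcal X$ and $\mathcal Y$ be polytopes with $p$ and $q$ vertices respectively, and let $\mathcal L(x,y)=x^\top My$ for a matrix $M$. Then the SP-FW algorithm with step size $\gamma_t=\frac1{t+1}$ satisfies $h(z^{(t)})=O\big(t^{-\frac1{p+q-2}}\big)$.
   Context: SP-FW algorithm: start from $z^{(0)}\in\mathcal X\times\mathcal Y$; at iteration $t$ compute $r^{(t)}:=(\nabla_x\mathcal L(z^{(t)}),-\nabla_y\mathcal L(z^{(t)}))$, $s^{(t)}\in\arg\min_{s\in\mathcal X\times\mathcal Y}\langle s,r^{(t)}\rangle$, and set $z^{(t+1)}:=(1-\gamma_t)z^{(t)}+\gamma_ts^{(t)}$. For $z=(x,y)$, $h(z):=\max_{y'\in\mathcal Y}\mathcal L(x,y')-\min_{x'\in\mathcal X}\mathcal L(x',y)$. *)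

(* Defs.v *)
From HB Require Import structures.
From mathcomp Require Import all_boot all_order all_algebra.
From mathcomp Require Import all_classical all_reals all_analysis.
Set Implicit Arguments. Unset Strict Implicit. Unset Printing Implicit Defensive.
Import Order.TTheory GRing.Theory Num.Theory.
Local Open Scope classical_set_scope.
Local Open Scope ring_scope.

Section SPFW.
Variable R : realType.

Definition dotv (n : nat) (a b : 'cV[R]_n) : R := (a^T *m b) 0 0.

Definition conv_hull (n p : nat) (v : 'I_p -> 'cV[R]_n) : set 'cV[R]_n :=
  [set x | exists w : 'I_p -> R,
     (forall i, 0 <= w i) /\ \sum_(i < p) w i = 1 /\
     x = \sum_(i < p) w i *: v i].

(* Each v i is a vertex of conv_hull v: it is not a convex combination of
   the other points v j (j <> i).  Hence conv_hull v is a polytope with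
   exactly p (distinct) vertices v 0, ..., v (p-1). *)
Definition vertices_of_hull (n p : nat) (v : 'I_p -> 'cV[R]_n) : Prop :=
  forall i : 'I_p, ~ exists w : 'I_p -> R,
     (forall j, 0 <= w j) /\ w i = 0 /\ \sum_(j < p) w j = 1 /\
     v i = \sum_(j < p) w j *: v j.

Definition bilin (n m : nat) (M : 'M[R]_(n, m)) (x : 'cV[R]_n) (y : 'cV[R]_m) : R :=
  (x^T *m M *m y) 0 0.

Definition gap (n m : nat) (M : 'M[R]_(n, m)) (X : set 'cV[R]_n) (Y : set 'cV[R]_m)
  (x : 'cV[R]_n) (y : 'cV[R]_m) : R :=
  sup [set bilin M x y' | y' in Y] - inf [set bilin M x' y | x' in X].

(* Here grad_x L(x,y) = M y and grad_y L(x,y) = M^T x, so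
   r^(t) = (M y_t, - M^T x_t) and <(a,b), r^(t)> = <a, M y_t> - <b, M^T x_t>.
   (sx t, sy t) is any minimizer of <s, r^(t)> over X x Y. *)
Definition spfw_run (n m : nat) (M : 'M[R]_(n, m)) (X : set 'cV[R]_n) (Y : set 'cV[R]_m)
  (x : nat -> 'cV[R]_n) (y : nat -> 'cV[R]_m)
  (sx : nat -> 'cV[R]_n) (sy : nat -> 'cV[R]_m) : Prop :=
  X (x 0%N) /\ Y (y 0%N) /\
  forall t : nat,
    [/\ X (sx t), Y (sy t),
        (forall a b, X a -> Y b ->
           dotv (sx t) (M *m y t) - dotv (sy t) (M^T *m x t)
           <= dotv a (M *m y t) - dotv b (M^T *m x t)),
        x t.+1 = (1 - (t.+1%:R)^-1) *: x t + (t.+1%:R)^-1 *: sx t &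
        y t.+1 = (1 - (t.+1%:R)^-1) *: y t + (t.+1%:R)^-1 *: sy t].

End SPFW.

(* Main.v *)
Require Import Defs.
From HB Require Import structures.
From mathcomp Require Import all_boot all_order all_algebra.
From mathcomp Require Import all_classical all_reals all_analysis.
From mathcomp Require Import ring lra zify.
From Stdlib Require Import Classical.
Import Order.TTheory GRing.Theory Num.Theory.
Local Open Scope classical_set_scope.
Local Open Scope ring_scope.

Set Implicit Arguments. Unset Strict Implicit. Unset Printing Implicit Defensive.

Local Close Scope classical_set_scope.

Section Robinson.
Variable R : realFieldType.

Section Sys.
Variables (T1 T2 : finType) (A : T1 -> T2 -> R) (I : {set T1}) (J : {set T2}).
Variables (V : nat -> T1 -> R) (U : nat -> T2 -> R) (w : nat -> T1 -> R) (u : nat -> T2 -> R).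

Record vsys (H : nat) : Prop := VSys {
  w_ge0 : forall t i, (t < H)%N -> 0 <= w t i;
  w_out : forall t i, (t < H)%N -> i \notin I -> w t i = 0;
  w_sum : forall t, (t < H)%N -> \sum_i w t i = 1;
  w_best : forall t i i', (t < H)%N -> w t i != 0 -> i' \in I -> V t i' <= V t i;
  u_ge0 : forall t j, (t < H)%N -> 0 <= u t j;
  u_out : forall t j, (t < H)%N -> j \notin J -> u t j = 0;
  u_sum : forall t, (t < H)%N -> \sum_j u t j = 1;
  u_best : forall t j j', (t < H)%N -> u t j != 0 -> j' \in J -> U t j <= U t j';
  V_step : forall t i, (t < H)%N -> V t.+1 i = V t i + \sum_j A i j * u t j;
  U_step : forall t j, (t < H)%N -> U t.+1 j = U t j + \sum_i w t i * A i j
}.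

Definition bnd t K := forall i j, i \in I -> j \in J -> V t i - U t j <= K.

Lemma bnd_le t K K' : K <= K' -> bnd t K -> bnd t K'.
Proof. by move=> le b i j Hi Hj; apply: le_trans (b i j Hi Hj) le. Qed.

End Sys.

Lemma rb_conv_le (T : finType) (c f : T -> R) b :
  (forall i, 0 <= c i) -> \sum_i c i = 1 -> (forall i, c i != 0 -> f i <= b) ->
  \sum_i c i * f i <= b.
Proof.
move=> c0 c1 cf.
apply: (@le_trans _ _ (\sum_i c i * b)); last by rewrite -mulr_suml c1 mul1r.
apply: ler_sum => i _; have [->|nz] := eqVneq (c i) 0; first by rewrite !mul0r.
by rewrite ler_wpM2l // cf.
Qed.

Lemma sum_norm_le (T : finType) (c f : T -> R) a :
  (forall i, 0 <= c i) -> \sum_i c i = 1 -> (forall i, `|f i| <= a) ->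
  `|\sum_i f i * c i| <= a.
Proof.
move=> c0 c1 fa.
apply: (le_trans (ler_norm_sum _ _ _)).
apply: (@le_trans _ _ (\sum_i c i * a)); last by rewrite -mulr_suml c1 mul1r.
apply: ler_sum => i _; rewrite normrM (ger0_norm (c0 i)) mulrC.
by rewrite ler_wpM2l.
Qed.


Lemma pair_sum (T1 T2 : finType) (X : T1 -> R) (Y : T2 -> R) f g :
  \sum_i \sum_j X i * Y j * (f i - g j) =
  (\sum_j Y j) * (\sum_i X i * f i) - (\sum_i X i) * (\sum_j Y j * g j).
Proof.
rewrite mulr_sumr mulr_suml -sumrB; apply: eq_bigr => i _.
rewrite mulr_suml mulr_sumr -sumrB; apply: eq_bigr => j _; ring.
Qed.

Lemma pair_const (T1 T2 : finType) (X : T1 -> R) (Y : T2 -> R) c :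
  \sum_i \sum_j X i * Y j * c = (\sum_i X i) * (\sum_j Y j) * c.
Proof.
rewrite -mulrA mulr_suml; apply: eq_bigr => i _.
rewrite mulr_suml mulr_sumr; apply: eq_bigr => j _; by rewrite mulrA.
Qed.

Section Props.
Variables (T1 T2 : finType) (A : T1 -> T2 -> R) (I : {set T1}) (J : {set T2}).
Variables (V : nat -> T1 -> R) (U : nat -> T2 -> R) (w : nat -> T1 -> R) (u : nat -> T2 -> R).
Variables (H : nat) (a : R).
Hypothesis S : vsys A I J V U w u H.
Hypothesis Aa : forall i j, `|A i j| <= a.

Lemma V_drift tau d i : (tau + d <= H)%N -> `|V (tau + d) i - V tau i| <= d%:R * a.
Proof.
elim: d => [|d IH] le; first by rewrite addn0 subrr normr0 mul0r.
have ltH : (tau + d < H)%N by rewrite -addnS.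
rewrite addnS (V_step S) //.
have h1 := IH (ltnW ltH).
have h2 : `|\sum_j A i j * u (tau + d) j| <= a.
  apply: sum_norm_le => [j||j]; [exact: (u_ge0 S) | exact: (u_sum S) | exact: Aa].
rewrite addrAC; apply: le_trans (ler_normD _ _) _.
by rewrite -natr1 mulrDl mul1r lerD.
Qed.

Lemma U_drift tau d j : (tau + d <= H)%N -> `|U (tau + d) j - U tau j| <= d%:R * a.
Proof.
elim: d => [|d IH] le; first by rewrite addn0 subrr normr0 mul0r.
have ltH : (tau + d < H)%N by rewrite -addnS.
rewrite addnS (U_step S) //.
have h1 := IH (ltnW ltH).
have h2 : `|\sum_i w (tau + d) i * A i j| <= a.
  rewrite (eq_bigr (fun i => A i j * w (tau + d) i)); last by move=> i _; rewrite mulrC.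
  apply: sum_norm_le => [i||i]; [exact: (w_ge0 S) | exact: (w_sum S) | exact: Aa].
rewrite addrAC; apply: le_trans (ler_normD _ _) _.
by rewrite -natr1 mulrDl mul1r lerD.
Qed.

Lemma bnd_drift s d K : (s + d <= H)%N -> bnd I J V U s K ->
  bnd I J V U (s + d) (K + 2 * (d%:R * a)).
Proof.
move=> le b i j Hi Hj.
have := V_drift i le; have := U_drift j le; rewrite !ler_norml => /andP[h1 h2] /andP[h3 h4].
have := b i j Hi Hj; lra.
Qed.

Lemma base_lem i0 K : i0 \in I -> (forall i, i \in I -> i = i0) -> 0 <= a ->
  bnd I J V U 0 K -> forall t, (t <= H)%N -> bnd I J V U t (K + 2 * a).
Proof.
move=> Hi0 HI a0 b0.
have wd : forall t j, (t < H)%N -> \sum_i w t i * A i j = A i0 j.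
  move=> t j lt.
  have wz : forall i, i != i0 -> w t i = 0.
    move=> i ne; apply: (w_out S lt); apply/negP => /HI /eqP; by rewrite (negbTE ne).
  have w1 : w t i0 = 1.
    by rewrite -(w_sum S lt) (bigD1 i0) //= big1 ?addr0 // => i /wz.
  rewrite (bigD1 i0) //= big1 ?addr0 ?w1 ?mul1r // => i /wz ->; by rewrite mul0r.
have Q : forall t, (t.+1 <= H)%N -> forall j, j \in J -> V t.+1 i0 - U t j <= K + a.
  elim=> [|t IH] lt j Hj.
    rewrite (V_step S) //.
    have h2 : `|\sum_j A i0 j * u 0 j| <= a.
      apply: sum_norm_le => [j'||j']; [exact: (u_ge0 S) | exact: (u_sum S) | exact: Aa].
    have := b0 i0 j Hi0 Hj; move: h2; rewrite ler_norml => /andP[_ h]; lra.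
  rewrite (V_step S) //.
  have -> : V t.+1 i0 + \sum_j0 A i0 j0 * u t.+1 j0 - U t.+1 j =
      \sum_j0 u t.+1 j0 * (V t.+1 i0 + A i0 j0 - U t.+1 j).
    apply: esym.
    rewrite (eq_bigr (fun j0 => u t.+1 j0 * (V t.+1 i0 - U t.+1 j) + A i0 j0 * u t.+1 j0));
      last by move=> j0 _; ring.
    rewrite big_split /= -mulr_suml (u_sum S lt) mul1r; ring.
  apply: rb_conv_le => [j0||j0 nz]; [exact: (u_ge0 S) | exact: (u_sum S) |].
  have Hj0 : j0 \in J.
    by apply/negPn/negP => h; move: nz; rewrite (u_out S lt h) eqxx.
  have h1 := u_best S lt nz Hj.
  have ltt : (t < H)%N by apply: ltnW.
  rewrite (U_step S) // wd // in h1.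
  have := IH (ltnW lt) j0 Hj0; lra.
move=> [|t] lt i j Hi Hj; rewrite (HI i Hi).
  have := b0 i0 j Hi0 Hj; lra.
have := Q t lt j Hj; rewrite (U_step S) // wd //.
have := Aa i0 j; rewrite ler_norml => /andP[h1 h2]; lra.
Qed.

Lemma elig_lem T L K : 0 <= a -> (0 < T)%N -> (T <= H)%N -> bnd I J V U 0 K ->
  (forall i, i \in I -> exists tau, [/\ (T - L <= tau)%N, (tau <= T)%N &
      forall i', i' \in I -> V tau i' <= V tau i]) ->
  (forall j, j \in J -> exists tau, [/\ (T - L <= tau)%N, (tau <= T)%N &
      forall j', j' \in J -> U tau j <= U tau j']) ->
  bnd I J V U T (K + 4 * (L%:R * a)).
Proof.
move=> a0 T0 TH b0 EI EJ.
pose X := fun i => \sum_(tau < T) w tau i.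
pose Y := fun j => \sum_(tau < T) u tau j.
have Vc : forall t, (t <= H)%N -> forall i,
    V t i = V 0 i + \sum_j A i j * \sum_(tau < t) u tau j.
  elim=> [|t IH] le i; first by rewrite big1 ?addr0 // => j _; rewrite big_ord0 mulr0.
  have ltH : (t < H)%N by [].
  rewrite (V_step S _ ltH) (IH (ltnW ltH)) -addrA; congr (_ + _); rewrite -big_split.
  by apply: eq_bigr => j _ /=; rewrite big_ord_recr /= mulrDr.
have Uc : forall t, (t <= H)%N -> forall j,
    U t j = U 0 j + \sum_i (\sum_(tau < t) w tau i) * A i j.
  elim=> [|t IH] le j; first by rewrite big1 ?addr0 // => i _; rewrite big_ord0 mul0r.
  have ltH : (t < H)%N by [].
  rewrite (U_step S _ ltH) (IH (ltnW ltH)) -addrA; congr (_ + _); rewrite -big_split.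
  by apply: eq_bigr => i _ /=; rewrite big_ord_recr /= mulrDl.
have ltT : forall tau : 'I_T, (tau < H)%N by move=> tau; exact: leq_trans (ltn_ord tau) TH.
have X0 : forall i, i \notin I -> X i = 0.
  by move=> i ni; rewrite /X big1 // => tau _; apply: (w_out S (ltT tau)).
have Y0 : forall j, j \notin J -> Y j = 0.
  by move=> j nj; rewrite /Y big1 // => tau _; apply: (u_out S (ltT tau)).
have Xge0 : forall i, 0 <= X i by move=> i; apply: sumr_ge0 => tau _; exact: (w_ge0 S _ (ltT tau)).
have Yge0 : forall j, 0 <= Y j by move=> j; apply: sumr_ge0 => tau _; exact: (u_ge0 S _ (ltT tau)).
have XT : \sum_i X i = T%:R.
  rewrite /X exchange_big /= (eq_bigr (fun _ => 1)) => [|tau _]; last exact: (w_sum S (ltT tau)).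
  by rewrite sumr_const card_ord.
have YT : \sum_j Y j = T%:R.
  rewrite /Y exchange_big /= (eq_bigr (fun _ => 1)) => [|tau _]; last exact: (u_sum S (ltT tau)).
  by rewrite sumr_const card_ord.
have E1 : \sum_i X i * V T i = \sum_i X i * V 0 i + \sum_i \sum_j X i * A i j * Y j.
  rewrite -big_split; apply: eq_bigr => i _; rewrite Vc // mulrDr mulr_sumr; congr (_ + _).
  by apply: eq_bigr => j _; rewrite mulrA.
have E2 : \sum_j Y j * U T j = \sum_j Y j * U 0 j + \sum_i \sum_j X i * A i j * Y j.
  rewrite exchange_big /= -big_split; apply: eq_bigr => j _; rewrite Uc // mulrDr mulr_sumr.
  by congr (_ + _); apply: eq_bigr => i _; rewrite mulrC.
have key : \sum_i \sum_j X i * Y j * (V T i - U T j) =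
           \sum_i \sum_j X i * Y j * (V 0 i - U 0 j).
  rewrite !pair_sum XT YT E1 E2; ring.
have pw : forall (c1 c2 : T1 -> T2 -> R),
    (forall i j, i \in I -> j \in J -> c1 i j <= c2 i j) ->
    \sum_i \sum_j X i * Y j * c1 i j <= \sum_i \sum_j X i * Y j * c2 i j.
  move=> c1 c2 h; apply: ler_sum => i _; apply: ler_sum => j _.
  have [Hi|Hi] := boolP (i \in I); last by rewrite X0 // !mul0r.
  have [Hj|Hj] := boolP (j \in J); last by rewrite Y0 // mulr0 !mul0r.
  by rewrite ler_wpM2l ?mulr_ge0 ?h.
have dV : forall tau i, (T - L <= tau)%N -> (tau <= T)%N -> `|V T i - V tau i| <= L%:R * a.
  move=> tau i h1 h2.
  have := @V_drift tau (T - tau) i; rewrite subnKC // => /(_ TH) h.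
  apply: le_trans h _; apply: ler_wpM2r => //; rewrite ler_nat; lia.
have dU : forall tau j, (T - L <= tau)%N -> (tau <= T)%N -> `|U T j - U tau j| <= L%:R * a.
  move=> tau j h1 h2.
  have := @U_drift tau (T - tau) j; rewrite subnKC // => /(_ TH) h.
  apply: le_trans h _; apply: ler_wpM2r => //; rewrite ler_nat; lia.
move=> i j Hi Hj.
pose g := V T i - U T j - 4 * (L%:R * a).
have Hg : forall i' j', i' \in I -> j' \in J -> g <= V T i' - U T j'.
  move=> i' j' Hi' Hj'.
  have [t1 [h1 h2 m1]] := EI i' Hi'.
  have [t2 [h3 h4 m2]] := EJ j' Hj'.
  have := m1 i Hi; have := m2 j Hj.
  have := dV t1 i h1 h2; have := dV t1 i' h1 h2.
  have := dU t2 j h3 h4; have := dU t2 j' h3 h4.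
  rewrite !ler_norml /g => /andP[? ?] /andP[? ?] /andP[? ?] /andP[? ?] ? ?; lra.
have h1 : \sum_i \sum_j X i * Y j * ((fun _ => g) i) <=
          \sum_i \sum_j X i * Y j * (V T i - U T j) by apply: pw.
have h2 : \sum_i \sum_j X i * Y j * (V 0 i - U 0 j) <=
          \sum_i \sum_j X i * Y j * ((fun _ => K) i).
  by apply: pw => i' j' Hi' Hj'; exact: b0.
rewrite key /= in h1; rewrite /= in h2.
have := le_trans h1 h2; rewrite !pair_const XT YT => h.
have TT : 0 < T%:R * T%:R :> R by rewrite mulr_gt0 // ltr0n.
have : g <= K by rewrite -(ler_pM2l TT).
rewrite /g; lra.
Qed.

End Props.

Section DualWin.
Variables (T1 T2 : finType) (A : T1 -> T2 -> R) (I : {set T1}) (J : {set T2}).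
Variables (V : nat -> T1 -> R) (U : nat -> T2 -> R) (w : nat -> T1 -> R) (u : nat -> T2 -> R).
Variable (H : nat).

Lemma dual_vsys : vsys A I J V U w u H ->
  vsys (fun j i => - A i j) J I (fun t j => - U t j) (fun t i => - V t i) u w H.
Proof.
case=> wg wo ws wb ug uo us ub Vs Us; split => //.
- by move=> t j j' lt nz Hj'; rewrite lerN2; exact: ub.
- by move=> t i i' lt nz Hi'; rewrite lerN2; exact: wb.
- move=> t j lt; rewrite Us // opprD; congr (_ + _); rewrite -sumrN.
  by apply: eq_bigr => i _ /=; rewrite mulNr mulrC.
- move=> t i lt; rewrite Vs // opprD; congr (_ + _); rewrite -sumrN.
  by apply: eq_bigr => j _ /=; rewrite mulrN mulrC.
Qed.

Lemma dual_bnd t K :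
  bnd J I (fun t j => - U t j) (fun t i => - V t i) t K <-> bnd I J V U t K.
Proof. by split => b x y Hx Hy; have := b y x Hy Hx; lra. Qed.

Lemma window_vsys s L i0 : vsys A I J V U w u H -> (s + L <= H)%N ->
  (forall tau, (s <= tau)%N -> (tau <= s + L)%N -> exists2 i', i' \in I & V tau i0 < V tau i') ->
  vsys A (I :\ i0) J (fun t => V (s + t)) (fun t => U (s + t))
       (fun t => w (s + t)) (fun t => u (s + t)) L.
Proof.
case=> wg wo ws wb ug uo us ub Vs Us le NE.
have lt : forall t, (t < L)%N -> (s + t < H)%N.
  by move=> t tL; rewrite (leq_trans _ le) // ltn_add2l.
split.
- by move=> t i tL; exact: wg (lt t tL).
- move=> t i tL; rewrite in_setD1 negb_and negbK => /orP[/eqP->|ni]; last exact: wo (lt t tL) ni.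
  apply/eqP/negPn/negP => nz.
  have le2 : (s + t <= s + L)%N by rewrite leq_add2l ltnW.
  have [i' Hi' ltV] := NE (s + t) (leq_addr _ _) le2.
  by have := wb _ _ _ (lt t tL) nz Hi'; rewrite leNgt ltV.
- by move=> t tL; exact: ws (lt t tL).
- by move=> t i i' tL nz /setD1P [_ Hi']; exact: wb (lt t tL) nz Hi'.
- by move=> t j tL; exact: ug (lt t tL).
- by move=> t j tL; exact: uo (lt t tL).
- by move=> t tL; exact: us (lt t tL).
- by move=> t j j' tL; exact: ub (lt t tL).
- by move=> t i tL; rewrite addnS; exact: Vs (lt t tL).
- by move=> t j tL; rewrite addnS; exact: Us (lt t tL).
Qed.

Lemma window_bnd_end s L i0 K :
  (exists2 i', i' \in I & V (s + L) i0 < V (s + L) i') ->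
  bnd (I :\ i0) J (fun t => V (s + t)) (fun t => U (s + t)) L K ->
  bnd I J V U (s + L) K.
Proof.
move=> [i' Hi' ltV] b i j Hi Hj.
have [->|ne] := eqVneq i i0.
  have Hi'' : i' \in I :\ i0.
    rewrite in_setD1 Hi' andbT; apply/eqP => e; move: ltV; by rewrite e ltxx.
  have := b i' j Hi'' Hj; rewrite /=; lra.
by apply: b => //; rewrite in_setD1 ne.
Qed.

Lemma window_bnd_start s K i0 : bnd I J V U s K ->
  bnd (I :\ i0) J (fun t => V (s + t)) (fun t => U (s + t)) 0 K.
Proof. by move=> b i j /setD1P[_ Hi] Hj; rewrite addn0; exact: b. Qed.

End DualWin.

Lemma eqle (x y : R) : x = y -> x <= y. Proof. by move->. Qed.

Definition claim (k : nat) := forall (T1 T2 : finType) (A : T1 -> T2 -> R)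
  (I : {set T1}) (J : {set T2}) V U w u H a,
  vsys A I J V U w u H -> 0 <= a -> (forall i j, `|A i j| <= a) ->
  (#|I| + #|J|)%N = k -> forall K, bnd I J V U 0 K ->
  forall N t, (0 < N)%N -> (t <= H)%N -> (t <= N ^ (k - 2))%N ->
  bnd I J V U t (K + 4 * a * k%:R * (N ^ (k - 3))%N%:R).

Lemma row_step k (IH : claim k) (T1 T2 : finType) (A : T1 -> T2 -> R)
  (I : {set T1}) (J : {set T2}) V U w u H a s L i0 K N :
  vsys A I J V U w u H -> 0 <= a -> (forall i j, `|A i j| <= a) ->
  (#|I| + #|J|)%N = k.+1 -> i0 \in I -> (s + L <= H)%N ->
  (forall tau, (s <= tau)%N -> (tau <= s + L)%N -> exists2 i', i' \in I & V tau i0 < V tau i') ->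
  bnd I J V U s K -> (0 < N)%N -> (L <= N ^ (k - 2))%N ->
  bnd I J V U (s + L) (K + 4 * a * k%:R * (N ^ (k - 3))%N%:R).
Proof.
move=> Sy a0 Aa card Hi0 le NE b0 N0 LN.
apply: (window_bnd_end (NE (s + L) (leq_addr _ _) (leqnn _))).
have card' : (#|I :\ i0| + #|J|)%N = k.
  by move: card; rewrite (cardsD1 i0 I) Hi0 add1n addSn => -[].
exact: (IH _ _ A (I :\ i0) J _ _ _ _ L a (window_vsys Sy le NE) a0 Aa card' K
          (window_bnd_start (i0 := i0) b0) N L N0 (leqnn L) LN).
Qed.

Lemma col_step k (IH : claim k) (T1 T2 : finType) (A : T1 -> T2 -> R)
  (I : {set T1}) (J : {set T2}) V U w u H a s L j0 K N :
  vsys A I J V U w u H -> 0 <= a -> (forall i j, `|A i j| <= a) ->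
  (#|I| + #|J|)%N = k.+1 -> j0 \in J -> (s + L <= H)%N ->
  (forall tau, (s <= tau)%N -> (tau <= s + L)%N -> exists2 j', j' \in J & U tau j' < U tau j0) ->
  bnd I J V U s K -> (0 < N)%N -> (L <= N ^ (k - 2))%N ->
  bnd I J V U (s + L) (K + 4 * a * k%:R * (N ^ (k - 3))%N%:R).
Proof.
move=> Sy a0 Aa card Hj0 le NE b0 N0 LN.
apply/dual_bnd; apply: (row_step (i0 := j0) IH (dual_vsys Sy)) => //.
- by move=> i j; rewrite normrN; exact: Aa.
- by rewrite addnC.
- by move=> tau h1 h2; have [j' Hj' lt] := NE tau h1 h2; exists j' => //; rewrite ltrN2.
- by apply/dual_bnd.
Qed.

Lemma small_I (T1 T2 : finType) (A : T1 -> T2 -> R)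
  (I : {set T1}) (J : {set T2}) V U w u H a K :
  vsys A I J V U w u H -> 0 <= a -> (forall i j, `|A i j| <= a) ->
  (#|I| <= 1)%N -> bnd I J V U 0 K -> forall t, (t <= H)%N -> bnd I J V U t (K + 2 * a).
Proof.
move=> Sy a0 Aa cI b0 t tH.
move: cI; rewrite leq_eqVlt ltnS leqn0 => /orP[/cards1P [x Ix] | /eqP/cards0_eq I0].
  apply: (base_lem Sy Aa (i0 := x)) => //; first by rewrite Ix set11.
  by move=> i; rewrite Ix => /set1P.
by move=> i j; rewrite I0 finset.in_set0.
Qed.

Lemma small_J (T1 T2 : finType) (A : T1 -> T2 -> R)
  (I : {set T1}) (J : {set T2}) V U w u H a K :
  vsys A I J V U w u H -> 0 <= a -> (forall i j, `|A i j| <= a) ->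
  (#|J| <= 1)%N -> bnd I J V U 0 K -> forall t, (t <= H)%N -> bnd I J V U t (K + 2 * a).
Proof.
move=> Sy a0 Aa cJ b0 t tH; apply/dual_bnd.
apply: (small_I (dual_vsys Sy)) => //.
- by move=> i j; rewrite normrN; exact: Aa.
- by apply/dual_bnd.
Qed.

Lemma claim_all k : claim k.
Proof.
elim: k => [|k IHk] T1 T2 A I J V U w u H a Sy a0 Aa card K b0 N t N0 tH tN.
  have I0 : I = finset.set0 by apply: cards0_eq; lia.
  by move=> i j; rewrite I0 finset.in_set0.
have small : (#|I| <= 1)%N || (#|J| <= 1)%N ->
    bnd I J V U t (K + 4 * a * k.+1%:R * (N ^ (k.+1 - 3))%N%:R).
  move=> h; apply: (@bnd_le _ _ _ _ _ _ _ (K + 2 * a)).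
    have h3 : 1 <= k.+1%:R * (N ^ (k.+1 - 3))%N%:R :> R.
      by rewrite -natrM ler1n muln_gt0 expn_gt0 N0.
    rewrite lerD2l -(mulrA (4 * a)).
    have : 0 <= a * (k.+1%:R * (N ^ (k.+1 - 3))%N%:R - 1) by rewrite mulr_ge0 // subr_ge0.
    lra.
  by case/orP: h => h; [apply: (small_I Sy) | apply: (small_J Sy)].
case: (boolP ((#|I| <= 1)%N || (#|J| <= 1)%N)) => [/small//|].
rewrite negb_or -!ltnNge => /andP[I2 J2].
have k3 : (3 <= k)%N by lia.
have kk : (k.+1 - 3 = k - 2)%N by lia.
have kk2 : (k.+1 - 2 = (k - 2).+1)%N by lia.
set L := (N ^ (k - 2))%N.
have L0 : (0 < L)%N by rewrite expn_gt0 N0.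
pose b := 4 * a * k%:R * (N ^ (k - 3))%N%:R.
pose c := 4 * (L%:R * a).
have bge0 : 0 <= b by rewrite /b !mulr_ge0 // ler0n.
have inner : forall j t, (t <= H)%N -> (t < j.+1 * L)%N -> bnd I J V U t (K + c + j%:R * b).
  elim=> [|j IHj] t' tH' tL.
    have := bnd_drift Sy Aa (s := 0) (d := t') (K := K); rewrite add0n => /(_ tH' b0) h.
    apply: bnd_le h; rewrite mul0r addr0 lerD2l /c.
    have : t'%:R <= L%:R :> R by rewrite ler_nat; rewrite mul1n in tL; apply: ltnW.
    move=> /(ler_wpM2r a0) h1; have h2 : 0 <= t'%:R * a by rewrite mulr_ge0.
    lra.
  case: (ltnP t' (j.+1 * L)) => [lt|ge].
    apply: bnd_le (IHj t' tH' lt); rewrite lerD2l -natr1 mulrDl mul1r lerDl //.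
  set M := (j.+1 * L)%N in ge tL.
  have MS : (j.+2 * L = M + L)%N by rewrite /M mulSn addnC.
  rewrite MS in tL.
  set s := (t' - L)%N.
  have ts : t' = (s + L)%N by rewrite /s subnK // (leq_trans _ ge) // /M leq_pmull.
  have sH : (s <= H)%N by lia.
  have sj : (s < M)%N by lia.
  have bs := IHj s sH sj.
  have tH2 : (s + L <= H)%N by rewrite -ts.
  have fin : K + c + j%:R * b + 4 * a * k%:R * (N ^ (k - 3))%N%:R = K + c + j.+1%:R * b.
    by rewrite -natr1 /b; ring.
  rewrite ts.
  case: (classic (exists2 i0, i0 \in I & forall tau, (s <= tau)%N -> (tau <= s + L)%N ->
      exists2 i', i' \in I & V tau i0 < V tau i')) => [[i0 Hi0 NE]|NR].
    by rewrite -fin; apply: (row_step IHk Sy a0 Aa card Hi0 tH2 NE bs N0).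
  case: (classic (exists2 j0, j0 \in J & forall tau, (s <= tau)%N -> (tau <= s + L)%N ->
      exists2 j', j' \in J & U tau j' < U tau j0)) => [[j0 Hj0 NE]|NC].
    by rewrite -fin; apply: (col_step IHk Sy a0 Aa card Hj0 tH2 NE bs N0).
  have el := @elig_lem _ _ A I J V U w u H a Sy Aa (s + L) L K a0.
  have sL0 : (0 < s + L)%N by rewrite addn_gt0 L0 orbT.
  apply: bnd_le (el sL0 tH2 b0 _ _).
  - rewrite -/c -addrA lerD2l lerDl mulr_ge0 //.
  - move=> i Hi; apply: NNPP => hne; apply: NR; exists i => // tau h1 h2.
    apply: NNPP => hne2; apply: hne; exists tau; split; [by rewrite addnK | done |].
    move=> i' Hi'; rewrite leNgt; apply/negP => lt; apply: hne2; by exists i'.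
  - move=> j' Hj'; apply: NNPP => hne; apply: NC; exists j' => // tau h1 h2.
    apply: NNPP => hne2; apply: hne; exists tau; split; [by rewrite addnK | done |].
    move=> j'' Hj''; rewrite leNgt; apply/negP => lt; apply: hne2; by exists j''.
have NL : (N * N ^ (k - 3) = L)%N by rewrite -expnS; congr expn; lia.
have tL : (t < N.+1 * L)%N.
  move: tN; rewrite kk2 expnS -/L mulSn => h; rewrite addnC; apply: (leq_ltn_trans h).
  by rewrite -[X in (X < _)%N]addn0 ltn_add2l.
apply: bnd_le (inner N t tH tL); rewrite /c /b.
have NLr : N%:R * (N ^ (k - 3))%N%:R = L%:R :> R by rewrite -natrM NL.
apply: eqle; rewrite -natr1 -NLr; ring.
Qed.

End Robinson.

Local Open Scope classical_set_scope.

Section Fin.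
Variable R : realType.

Lemma bilinDl n m (M : 'M[R]_(n,m)) x1 x2 y : bilin M (x1 + x2) y = bilin M x1 y + bilin M x2 y.
Proof. by rewrite /bilin linearD /= !mulmxDl mxE. Qed.
Lemma bilinZl n m (M : 'M[R]_(n,m)) c x y : bilin M (c *: x) y = c * bilin M x y.
Proof. by rewrite /bilin linearZ /= -!scalemxAl mxE. Qed.
Lemma bilin0l n m (M : 'M[R]_(n,m)) y : bilin M 0 y = 0.
Proof. by rewrite /bilin linear0 !mul0mx mxE. Qed.
Lemma bilinDr n m (M : 'M[R]_(n,m)) x y1 y2 : bilin M x (y1 + y2) = bilin M x y1 + bilin M x y2.
Proof. by rewrite /bilin mulmxDr mxE. Qed.
Lemma bilinZr n m (M : 'M[R]_(n,m)) c x y : bilin M x (c *: y) = c * bilin M x y.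
Proof. by rewrite /bilin -scalemxAr mxE. Qed.
Lemma bilin0r n m (M : 'M[R]_(n,m)) x : bilin M x 0 = 0.
Proof. by rewrite /bilin mulmx0 mxE. Qed.

Lemma bilin_suml n m (M : 'M[R]_(n,m)) p (c : 'I_p -> R) v y :
  bilin M (\sum_i c i *: v i) y = \sum_i c i * bilin M (v i) y.
Proof.
apply: (big_rec2 (fun a b => bilin M a y = b)); first exact: bilin0l.
by move=> i a b _ <-; rewrite bilinDl bilinZl.
Qed.

Lemma bilin_sumr n m (M : 'M[R]_(n,m)) p (c : 'I_p -> R) v x :
  bilin M x (\sum_i c i *: v i) = \sum_i c i * bilin M x (v i).
Proof.
apply: (big_rec2 (fun a b => bilin M x a = b)); first exact: bilin0r.
by move=> i a b _ <-; rewrite bilinDr bilinZr.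
Qed.

Lemma dotv_l n m (M : 'M[R]_(n,m)) a y : dotv a (M *m y) = bilin M a y.
Proof. by rewrite /dotv /bilin mulmxA. Qed.

Lemma dotv_r n m (M : 'M[R]_(n,m)) b x : dotv b (M^T *m x) = bilin M x b.
Proof.
rewrite /dotv /bilin.
have -> : b^T *m (M^T *m x) = (x^T *m M *m b)^T by rewrite !trmx_mul trmxK.
by rewrite mxE.
Qed.

Lemma supp_min p (c wt : 'I_p -> R) j : (forall k, 0 <= wt k) -> \sum_k wt k = 1 ->
  (forall l, \sum_k wt k * c k <= c l) -> wt j != 0 -> forall l, c j <= c l.
Proof.
move=> w0 w1 opt nz l.
case: (arg_minP c (P := xpredT) (i0 := j) isT) => mm _ Hm.
have h1 := opt mm.
have h2 : \sum_k wt k * (c k - c mm) <= 0.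
  rewrite (eq_bigr (fun k => wt k * c k - wt k * c mm)); last by move=> k _; rewrite mulrBr.
  by rewrite sumrB -mulr_suml w1 mul1r subr_le0.
have h3 : wt j * (c j - c mm) <= \sum_k wt k * (c k - c mm).
  rewrite (bigD1 j) //= lerDl sumr_ge0 // => k _; by rewrite mulr_ge0 // subr_ge0 Hm.
have wpos : 0 < wt j by rewrite lt_def nz w0.
have := le_trans h3 h2; rewrite pmulr_rle0 // subr_le0 => h.
exact: le_trans h (Hm l isT).
Qed.

Lemma conv_ge (T : finType) (c f : T -> R) b :
  (forall i, 0 <= c i) -> \sum_i c i = 1 -> (forall i, c i != 0 -> b <= f i) ->
  b <= \sum_i c i * f i.
Proof.
move=> c0 c1 cf.
have := @rb_conv_le R T c (fun i => - f i) (- b) c0 c1.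
rewrite (eq_bigr (fun i => - (c i * f i))); last by move=> i _; rewrite mulrN.
rewrite sumrN lerN2; apply => i nz; rewrite lerN2; exact: cf.
Qed.

Lemma vert_in n p (v : 'I_p -> 'cV[R]_n) j : conv_hull v (v j).
Proof.
exists (fun k => (k == j)%:R); split; first by move=> k; rewrite ler0n.
split; first by rewrite (bigD1 j) //= eqxx big1 ?addr0 // => k /negbTE ->.
by rewrite (bigD1 j) //= eqxx scale1r big1 ?addr0 // => k /negbTE ->; rewrite scale0r.
Qed.

Lemma gap_le n m p q (vX : 'I_p -> 'cV[R]_n) (vY : 'I_q -> 'cV[R]_m) (M : 'M[R]_(n, m))
  xt yt x0 y0 (t : nat) B :
  conv_hull vX x0 -> conv_hull vY y0 -> (0 < t)%N ->
  (forall i j, t%:R * bilin M xt (vY i) - t%:R * bilin M (vX j) yt <= B) ->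
  gap M (conv_hull vX) (conv_hull vY) xt yt <= B / t%:R.
Proof.
move=> X0 Y0 t0 HB.
have tp : 0 < t%:R :> R by rewrite ltr0n.
have key : forall y', conv_hull vY y' -> forall x', conv_hull vX x' ->
    bilin M xt y' - bilin M x' yt <= B / t%:R.
  move=> y' [b [b0 [b1 ->]]] x' [c [c0 [c1 ->]]]; rewrite bilin_sumr bilin_suml.
  have fg : forall i j, bilin M xt (vY i) - bilin M (vX j) yt <= B / t%:R.
    by move=> i j; rewrite ler_pdivlMr // mulrC mulrBr.
  have h : forall j, \sum_i b i * bilin M xt (vY i) <= bilin M (vX j) yt + B / t%:R.
    move=> j; apply: rb_conv_le => // i _; have := fg i j; lra.
  have h' : \sum_i b i * bilin M xt (vY i) - B / t%:R <= \sum_j c j * bilin M (vX j) yt.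
    apply: conv_ge => // j _; have := h j; lra.
  lra.
rewrite /gap.
have Sne : [set bilin M xt y' | y' in conv_hull vY] !=set0.
  by exists (bilin M xt y0); exists y0.
have Tne : [set bilin M x' yt | x' in conv_hull vX] !=set0.
  by exists (bilin M x0 yt); exists x0.
have : sup [set bilin M xt y' | y' in conv_hull vY] <=
       inf [set bilin M x' yt | x' in conv_hull vX] + B / t%:R.
  rewrite -lerBlDr; apply: lb_le_inf Tne _ => z [x' Hx' <-].
  rewrite lerBlDr; apply: ge_sup Sne _ => s [y' Hy' <-].
  have := key y' Hy' x' Hx'; lra.
lra.
Qed.

End Fin.

Lemma main_bound (R : realType) (n m p q : nat)
  (vX : 'I_p -> 'cV[R]_n) (vY : 'I_q -> 'cV[R]_m) (M : 'M[R]_(n, m))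
  (x : nat -> 'cV[R]_n) (y : nat -> 'cV[R]_m)
  (sx : nat -> 'cV[R]_n) (sy : nat -> 'cV[R]_m) :
  spfw_run M (conv_hull vX) (conv_hull vY) x y sx sy ->
  exists a : R, 0 <= a /\ exists V U ww uu,
    (forall H, vsys (fun (i : 'I_q) (j : 'I_p) => bilin M (vX j) (vY i))
                    [set: 'I_q]%SET [set: 'I_p]%SET V U ww uu H) /\
    (forall i j, `|bilin M (vX j) (vY i)| <= a) /\
    bnd [set: 'I_q]%SET [set: 'I_p]%SET V U 0 0 /\
    (forall t i, V t i = t%:R * bilin M (x t) (vY i)) /\
    (forall t j, U t j = t%:R * bilin M (vX j) (y t)).
Proof.
move=> [X0 [Y0 Hst]].
have hx : forall t, exists w : 'I_p -> R,
    (forall i, 0 <= w i) /\ \sum_i w i = 1 /\ sx t = \sum_i w i *: vX i.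
  by move=> t; case: (Hst t).
have hy : forall t, exists w : 'I_q -> R,
    (forall i, 0 <= w i) /\ \sum_i w i = 1 /\ sy t = \sum_i w i *: vY i.
  by move=> t; case: (Hst t).
have [uu Huu] := boolp.choice hx.
have [ww Hww] := boolp.choice hy.
pose A := fun (i : 'I_q) (j : 'I_p) => bilin M (vX j) (vY i).
pose V := fun t (i : 'I_q) => bilin M (t%:R *: x t) (vY i).
pose U := fun t (j : 'I_p) => bilin M (vX j) (t%:R *: y t).
have xrec : forall t, t.+1%:R *: x t.+1 = t%:R *: x t + sx t.
  move=> t; case: (Hst t) => _ _ _ -> _.
  have nz : t.+1%:R != 0 :> R by rewrite pnatr_eq0.
  by rewrite scalerDr !scalerA mulrBr mulr1 mulfV // scale1r -natr1 addrK.
have yrec : forall t, t.+1%:R *: y t.+1 = t%:R *: y t + sy t.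
  move=> t; case: (Hst t) => _ _ _ _ ->.
  have nz : t.+1%:R != 0 :> R by rewrite pnatr_eq0.
  by rewrite scalerDr !scalerA mulrBr mulr1 mulfV // scale1r -natr1 addrK.
exists (\sum_i \sum_j `|A i j|); split.
  by apply: sumr_ge0 => i _; apply: sumr_ge0.
exists V, U, ww, uu; split; last split; last split; last split.
- move=> H; split.
  + by move=> t i _; case: (Hww t) => h _.
  + by move=> t i _; rewrite inE.
  + by move=> t _; case: (Hww t) => _ [].
  + move=> t i i' _ nz _; rewrite /V !bilinZl; apply: ler_wpM2l; first exact: ler0n.
    case: (Hww t) => w0 [w1 sye].
    suff : - bilin M (x t) (vY i) <= - bilin M (x t) (vY i') by rewrite lerN2.
    apply: (supp_min (c := fun k => - bilin M (x t) (vY k)) w0 w1 _ nz i').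
    move=> l; rewrite (eq_bigr (fun k => - (ww t k * bilin M (x t) (vY k)))); last by move=> k _; rewrite mulrN.
    rewrite sumrN -bilin_sumr -sye lerN2.
    case: (Hst t) => Hsx Hsy opt _ _.
    have := opt (sx t) (vY l) Hsx (vert_in vY l); rewrite !dotv_r; lra.
  + by move=> t j _; case: (Huu t) => h _.
  + by move=> t j _; rewrite inE.
  + by move=> t _; case: (Huu t) => _ [].
  + move=> t j j' _ nz _; rewrite /U !bilinZr; apply: ler_wpM2l; first exact: ler0n.
    case: (Huu t) => w0 [w1 sxe].
    apply: (supp_min (c := fun k => bilin M (vX k) (y t)) w0 w1 _ nz j').
    move=> l; rewrite -bilin_suml -sxe.
    case: (Hst t) => Hsx Hsy opt _ _.
    have := opt (vX l) (sy t) (vert_in vX l) Hsy; rewrite !dotv_l; lra.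
  + move=> t i _; rewrite /V xrec bilinDl; congr (_ + _).
    case: (Huu t) => _ [_ ->]; rewrite bilin_suml; apply: eq_bigr => j _; by rewrite mulrC.
  + move=> t j _; rewrite /U yrec bilinDr; congr (_ + _).
    by case: (Hww t) => _ [_ ->]; rewrite bilin_sumr.
- move=> i j; rewrite (bigD1 i) //= (bigD1 j) //= -addrA lerDl.
  by rewrite addr_ge0 ?sumr_ge0 // => *; rewrite ?normr_ge0 ?sumr_ge0.
- by move=> i j _ _; rewrite /V /U !scale0r bilin0l bilin0r subrr.
- by move=> t i; rewrite /V bilinZl.
- by move=> t j; rewrite /U bilinZr.
Qed.

Unset Implicit Arguments. Set Strict Implicit.

Theorem corollary5 (R : realType) (n m p q : nat)
  (vX : 'I_p -> 'cV[R]_n) (vY : 'I_q -> 'cV[R]_m) (M : 'M[R]_(n, m))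
  (x : nat -> 'cV[R]_n) (y : nat -> 'cV[R]_m)
  (sx : nat -> 'cV[R]_n) (sy : nat -> 'cV[R]_m) :
  vertices_of_hull vX -> vertices_of_hull vY ->
  spfw_run M (conv_hull vX) (conv_hull vY) x y sx sy ->
  exists C : R, exists T : nat, forall t : nat, (T <= t)%N ->
    gap M (conv_hull vX) (conv_hull vY) (x t) (y t)
      <= C * (t%:R `^ (- ((p + q - 2)%N%:R)^-1)).
Proof.
move=> _ _ run.
have [X0 [Y0 _]] := run.
have [a [a0 [V [U [ww [uu [Sys [Aa [b0 [Ve Ue]]]]]]]]]] := main_bound run.
have p0 : (0 < p)%N.
  case: X0 => w' [_ [w1 _]]; rewrite lt0n; apply/eqP => p0; subst p.
  by move: w1; rewrite big_ord0 => /esym/eqP; rewrite oner_eq0.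
have q0 : (0 < q)%N.
  case: Y0 => w' [_ [w1 _]]; rewrite lt0n; apply/eqP => q0; subst q.
  by move: w1; rewrite big_ord0 => /esym/eqP; rewrite oner_eq0.
have card : (#|[set: 'I_q]%SET| + #|[set: 'I_p]%SET|)%N = (p + q)%N.
  by rewrite !cardsT !card_ord addnC.
have GB : forall t B, (0 < t)%N -> bnd [set: 'I_q]%SET [set: 'I_p]%SET V U t B ->
    gap M (conv_hull vX) (conv_hull vY) (x t) (y t) <= B / t%:R.
  move=> t B t0 bt; apply: (gap_le X0 Y0 t0) => i j; rewrite -Ve -Ue; apply: bt; by rewrite inE.
case: (leqP (p + q) 2) => [le2|gt2].
  have cI : (#|[set: 'I_q]%SET| <= 1)%N by rewrite cardsT card_ord; lia.
  exists (2 * a), 1%N => t t1.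
  have bt := small_I (Sys t) a0 Aa cI b0 (leqnn t).
  have := GB t _ t1 bt; rewrite add0r.
  have -> : (p + q - 2)%N = 0%N by lia.
  rewrite invr0 oppr0 powRr0 mulr1 => h; apply: le_trans h _.
  rewrite ler_pdivrMr ?ltr0n //; apply: ler_peMr; [by rewrite mulr_ge0 | by rewrite ler1n].
set d := (p + q - 2)%N.
have d1 : (0 < d)%N by rewrite /d subn_gt0.
exists (4 * a * (p + q)%:R * 2 ^+ (d - 1)), 1%N => t t1.
have tpos : 0 < t%:R :> R by rewrite ltr0n.
pose r : R := (t%:R : R) `^ (d%:R^-1).
have rd : r ^+ d = t%:R.
  rewrite /r -powR_mulrn ?powR_ge0 // -powRrM mulVf ?powRr1 ?ler0n //.
  by rewrite pnatr_eq0 -lt0n.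
have r1 : 1 <= r.
  have := @ge0_ler_powR R (d%:R^-1) _ 1 t%:R _ _ _.
  by rewrite powR1 => ->; rewrite ?invr_ge0 ?ler0n ?nnegrE ?ler0n ?ler1n.
pose N := (Num.trunc r).+1.
have rN : r < N%:R := truncnS_gt r.
have Nr : N%:R <= r + 1.
  by rewrite /N -natr1 lerD2r truncn_le (le_trans _ r1).
have tN : (t <= N ^ d)%N.
  rewrite -(ler_nat R) natrX -rd; apply: lerXn2r; rewrite ?nnegrE ?ler0n //.
    exact: (le_trans _ r1).
  exact: ltW.
have N0 : (0 < N)%N by [].
have := @claim_all R (p + q) _ _ _ _ _ _ _ _ _ t a (Sys t) a0 Aa card 0 b0 N t N0 (leqnn t) tN.
move/(GB t _ t1); rewrite add0r => h; apply: le_trans h _.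
rewrite powRN -/r.
set e := (d - 1)%N.
have de : d = e.+1 by rewrite /e; lia.
have ke : (p + q - 3)%N = e by rewrite /e /d; lia.
rewrite ke -rd de exprSr natrX invfM mulrA.
have r0 : 0 < r by apply: lt_le_trans r1.
have re : 0 < r ^+ e by rewrite exprn_gt0.
apply: ler_wpM2r; first by rewrite invr_ge0 ltW.
rewrite ler_pdivrMr // -(mulrA (4 * a * (p + q)%:R)) -exprMn; apply: ler_wpM2l.
  by rewrite !mulr_ge0 ?ler0n.
apply: lerXn2r.
- by rewrite nnegrE ler0n.
- by rewrite nnegrE mulr_ge0 // ltW.
- lra.
Qed.
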